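(* Fix a horizon $T\in\mathbb{N}$, demands $D_1,\dots,D_T\in\mathbb{R}$, prices $\lambda_1,\dots,\lambda_T\ge 0$, a degradation cost $c\ge 0$, power limit $\overline{P}>0$, energy limits $0\le \underline{E}\le \overline{E}$, efficiency $\eta\in(0,1]$ and an initial state of charge $e_1\in[\underline{E},\overline{E}]$. Let $S$ denote the set of $(p,d,q,e)$ with $p\in\mathbb{R}$, $d,q\in\mathbb{R}^T$, $e=(e_2,\dots,e_{T+1})\in\mathbb{R}^T$ satisfying, for all $t=1,\dots,T$: $$p\ge D_t-d_t+q_t,\qquad e_{t+1}=e_t-d_t/\eta+\eta q_t,\qquad 0\le d_t,q_t\le \overline{P},\qquad \underline{E}\le e_{t+1}\le \overline{E},$$ and assume $S\neq\emptyset$. Combined problem: for a peak-demand charge $\kappa>0$, $$\min_{(p,d,q,e)\in S}\ \sum_{t=1}^T\big[c\,d_t+\lambda_t(D_t-d_t+q_t)\big]+\kappa p.$$ Stage 1 (peak shaving): for $\delta>0$, $$\min_{(p,d,q,e)\in S}\ p+\delta\sum_{t=1}^T e_{t+1},$$ with an optimal solution $(p^*,d^*,q^*,e^* )$. Stage 2 (arbitrage): given $(p^*,e^* )$, $$\min_{d,q,e}\ \sum_{t=1}^T\big[c\,d_t-\lambda_t(d_t-q_t)\big]$$ subject to $p^*\ge D_t-d_t+q_t$, $e_{t+1}\ge e^*_{t+1}$, $e_{t+1}=e_t-d_t/\eta+\eta q_t$, $0\le d_t,q_t\le\overline{P}$, $\underline{E}\le e_{t+1}\le\overline{E}$ for all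 $t=1,\dots,T$. Claim: if $\delta>0$ is sufficiently small and $\kappa$ is sufficiently large relative to $c$ and the $\lambda_t$, then solving Stage 1 followed by Stage 2 is equivalent to solving the combined problem; that is, the optimal peak of the combined problem equals $p^*$, and for any optimal solution $(d,q,e)$ of Stage 2, the point $(p^*,d,q,e)$ is an optimal solution of the combined problem, with combined optimal value equal to $\sum_{t=1}^T\lambda_tD_t+\kappa p^*+(\text{optimal value of Stage 2})$.
   Context: This models a behind-the-meter battery in a building: $d_t$ and $q_t$ are the discharge and charge energy in timestep $t$, $e_{t+1}$ is the state of charge after timestep $t$, $p$ is the peak net demand over the horizon, $D_t-d_t+q_t$ is the net demand in timestep $t$, $\kappa$ is the peak demand charge, $\lambda_t$ the real-time energy price and $c$ the per-unit battery degradation cost. The term $\delta\sum_t e_{t+1}$ in Stage 1 is a small tie-breaking term selecting a low state-of-charge trajectory among peak-minimizing solutions. *)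

(* Defs.v *)
From HB Require Import structures.
From mathcomp Require Import all_boot all_order all_algebra.
From mathcomp Require Import reals.
Set Implicit Arguments. Unset Strict Implicit. Unset Printing Implicit Defensive.
Import Order.TTheory GRing.Theory Num.Theory.
Local Open Scope ring_scope.

Section Battery.
Variable R : realType.
Variable T : nat.
(* Timestep t = 1..T is represented by t : 'I_T (0-based). A trajectory
   e : 'I_T -> R stores e_{t+1} at index t (i.e. e_2, ..., e_{T+1}). *)
Variables (D lam : 'I_T -> R) (c Pbar Emin Emax eta e1 : R).

Definition prev_soc (e : 'I_T -> R) (t : 'I_T) : R :=
  match val t with
  | 0 => e1
  | k.+1 => match @insub nat (fun n => n < T)%N 'I_T k with
            | Some i => e i
            | None => e1
            end
  end.

Definition feasible (p : R) (d q e : 'I_T -> R) : Prop :=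
  forall t : 'I_T,
    [/\ D t - d t + q t <= p,
        e t = prev_soc e t - d t / eta + eta * q t,
        0 <= d t <= Pbar,
        0 <= q t <= Pbar &
        Emin <= e t <= Emax].

Definition combined_obj (kappa p : R) (d q : 'I_T -> R) : R :=
  \sum_(t < T) (c * d t + lam t * (D t - d t + q t)) + kappa * p.

Definition combined_opt (kappa p : R) (d q e : 'I_T -> R) : Prop :=
  feasible p d q e /\
  forall p' d' q' e', feasible p' d' q' e' ->
    combined_obj kappa p d q <= combined_obj kappa p' d' q'.

Definition stage1_obj (delta p : R) (e : 'I_T -> R) : R :=
  p + delta * \sum_(t < T) e t.

Definition stage1_opt (delta p : R) (d q e : 'I_T -> R) : Prop :=
  feasible p d q e /\
  forall p' d' q' e', feasible p' d' q' e' ->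
    stage1_obj delta p e <= stage1_obj delta p' e'.

Definition stage2_obj (d q : 'I_T -> R) : R :=
  \sum_(t < T) (c * d t - lam t * (d t - q t)).

Definition stage2_feasible (pstar : R) (estar : 'I_T -> R) (d q e : 'I_T -> R)
  : Prop :=
  feasible pstar d q e /\ forall t : 'I_T, estar t <= e t.

Definition stage2_opt (pstar : R) (estar : 'I_T -> R) (d q e : 'I_T -> R)
  : Prop :=
  stage2_feasible pstar estar d q e /\
  forall d' q' e', stage2_feasible pstar estar d' q' e' ->
    stage2_obj d q <= stage2_obj d' q'.

End Battery.

(* Main.v *)
Require Import Defs.
From HB Require Import structures.
From mathcomp Require Import all_boot all_order all_algebra.
From mathcomp Require Import reals ring lra.
Import Order.TTheory GRing.Theory Num.Theory.
Local Open Scope ring_scope.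

Section L.
Variable R : realType.

Lemma divP (a x : R) : 0 < a -> exists u, a * u = x /\ u = x / a.
Proof. move=> ha; exists (x / a); split=> //; rewrite mulrC divfK //; lra. Qed.

Lemma lecase (x y : R) : x <= y \/ y < x.
Proof. by case: (lerP x y); [left|right]. Qed.

Lemma cle {a x y : R} : 0 < a -> a * x <= a * y -> x <= y.
Proof. by move=> ha; rewrite ler_pM2l. Qed.

Lemma stepL (al be P r d1 q1 d2 q2 : R) : 0 < be -> be <= al ->
  0 <= d1 <= P -> 0 <= q1 <= P -> r <= d1 - q1 ->
  0 <= d2 <= P -> 0 <= q2 <= P -> r <= d2 - q2 ->
  exists d3 q3, [/\ 0 <= d3 <= P, 0 <= q3 <= P, r <= d3 - q3,
    al * d3 - be * q3 = al * d2 - be * q2 &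
    `|d3 - d1| + `|q3 - q1| <=
      (al^-1 + be^-1 + 2 * (al - be)^-1) *
        `|(al * d2 - be * q2) - (al * d1 - be * q1)|].
Proof.
move=> hb hba /andP[d10 d1P] /andP[q10 q1P] hr1 /andP[d20 d2P] /andP[q20 q2P] hr2.
have ha : 0 < al by lra.
move Ey1 : (al * d1 - be * q1) => y1; move Ey2 : (al * d2 - be * q2) => y2.
have ia0 : 0 <= al^-1 by rewrite invr_ge0; lra.
have ib0 : 0 <= be^-1 by rewrite invr_ge0; lra.
have iab0 : 0 <= (al - be)^-1 by rewrite invr_ge0; lra.
set C := al^-1 + be^-1 + 2 * (al - be)^-1.
have y2le : y2 <= al * P by rewrite -Ey2; nra.
have y2ge1 : be * r <= y2 by rewrite -Ey2; nra.
have y2ge2 : al * r <= y2 by rewrite -Ey2; nra.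
have y2ge3 : - (be * P) <= y2 by rewrite -Ey2; nra.
case: (lecase y1 y2) => hy.
-
  have hn : 0 <= y2 - y1 by lra.
  rewrite (ger0_norm hn).
  have [u [hu ue]] := @divP al (y2 - y1) ha.
  have u0 : 0 <= u by rewrite ue divr_ge0 //; lra.
  have Ceq : C * (y2 - y1) = u + be^-1*(y2-y1) + 2*(al-be)^-1*(y2-y1) by rewrite /C ue; ring.
  clear ue.
  have t1 : 0 <= be^-1 * (y2 - y1) by apply: mulr_ge0 => //; lra.
  have t2 : 0 <= 2 * (al - be)^-1 * (y2 - y1) by apply: mulr_ge0; [apply: mulr_ge0 | lra].
  rewrite Ceq.
  case: (lecase (d1 + u) P) => hI.
  + exists (d1 + u), q1; split; [apply/andP; split; lra | apply/andP; split; lra | lra | | ].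
    * rewrite mulrDr hu; lra.
    * rewrite (_ : d1 + u - d1 = u); last by ring.
      rewrite subrr normr0 addr0 ger0_norm //; lra.
  + have [w [hw we]] := @divP be (al * P - y2) hb.
    have w0 : 0 <= w by rewrite we divr_ge0 //; lra.
    clear we.
    have alu : al * P < al * (d1 + u) by rewrite ltr_pM2l.
    rewrite mulrDr in alu.
    have wq1 : w <= q1 by apply: (cle hb); lra.
    have wb : q1 - w <= be^-1 * (y2 - y1).
      have h0 : al * d1 <= al * P by rewrite ler_pM2l.
      have h : be * (q1 - w) <= y2 - y1 by rewrite mulrBr; lra.
      rewrite -(ler_pM2l hb) mulrA mulfV ?mul1r //; lra.
    have wP : 0 <= P * al - y2 by lra.
    exists P, w; split; [apply/andP; split; lra | apply/andP; split; lra | lra | lra | ].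
    * have hn1 : 0 <= P - d1 by lra. rewrite (ger0_norm hn1).
      have hn2 : w - q1 <= 0 by lra. rewrite (ler0_norm hn2).
      lra.
-
  have hn : y2 - y1 <= 0 by lra.
  rewrite (ler0_norm hn) opprB.
  have [u [hu ue]] := @divP al (y1 - y2) ha.
  have u0 : 0 <= u by rewrite ue divr_ge0 //; lra.
  have Cge : u + be^-1 * (y1 - y2) + 2 * (al - be)^-1 * (y1 - y2) <= C * (y1 - y2).
    by rewrite /C ue; rewrite le_eqVlt; apply/orP; left; apply/eqP; ring.
  clear ue.
  have t1 : 0 <= be^-1 * (y1 - y2) by apply: mulr_ge0 => //; lra.
  have t2 : 0 <= 2 * (al - be)^-1 * (y1 - y2) by apply: mulr_ge0; [apply: mulr_ge0 | lra].
  have D2 : d1 <= d1 - q1 - r -> d1 < u -> exists d3 q3, [/\ 0 <= d3 <= P, 0 <= q3 <= P, r <= d3 - q3,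
    al * d3 - be * q3 = y2 & `|d3 - d1| + `|q3 - q1| <= C * (y1 - y2)].
    move=> hS hdu.
    have [w [hw we]] := @divP be (- y2) hb.
    have a1 : al * d1 < al * u by rewrite ltr_pM2l.
    have a2 : 0 <= al * d1 by apply: mulr_ge0; lra.
    have y2n : y2 < - (be * q1) by lra.
    have wq : q1 <= w by apply: (cle hb); lra.
    have wb : w - q1 <= be^-1 * (y1 - y2).
      have h : be * (w - q1) <= y1 - y2 by rewrite mulrBr; lra.
      by rewrite -(ler_pM2l hb) mulrA mulfV ?mul1r //; lra.
    have wP : w <= P by apply: (cle hb); lra.
    have wr : w <= - r by apply: (cle hb); rewrite mulrN; lra.
    exists 0, w; split; try (apply/andP; split); try lra.
    rewrite sub0r normrN (ger0_norm d10).
    have hn2 : 0 <= w - q1 by lra. rewrite (ger0_norm hn2).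
    lra.
  have D3 : d1 - q1 - r < d1 -> d1 - q1 - r < u -> exists d3 q3, [/\ 0 <= d3 <= P, 0 <= q3 <= P, r <= d3 - q3,
    al * d3 - be * q3 = y2 & `|d3 - d1| + `|q3 - q1| <= C * (y1 - y2)].
    move=> hS hSu.
    have a1 : al * (d1 - q1 - r) < al * u by rewrite ltr_pM2l.
    have a2 : 0 <= al * (d1 - q1 - r) by apply: mulr_ge0; lra.
    rewrite !mulrBr in a1 a2.
    have hk : be < al.
      rewrite lt_neqAle hba andbT; apply/eqP => E.
      move: E hu y2ge2 Ey1 a1 => <- hu y2ge2 Ey1 a1. lra.
    have hk0 : 0 < al - be by lra.
    have [s [hs se]] := @divP (al - be) (al * (q1 + r) - be * q1 - y2) hk0.
    rewrite mulrBl mulrDr in hs.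
    have s0 : 0 < s.
      have h : (al - be) * 0 < (al - be) * s by rewrite mulr0 mulrBl; lra.
      by rewrite ltr_pM2l in h.
    have sq : s <= q1 by apply: (cle hk0); rewrite !mulrBl; lra.
    have sqr : s <= q1 + r by apply: (cle hk0); rewrite !mulrBl !mulrDr; lra.
    have sb : s <= (al - be)^-1 * (y1 - y2).
      have h : (al - be) * s <= y1 - y2 by rewrite !mulrBl; lra.
      by rewrite -(ler_pM2l hk0) mulrA mulfV ?mul1r //; lra.
    exists (q1 + r - s), (q1 - s); split; try (apply/andP; split).
    - lra.
    - lra.
    - lra.
    - lra.
    - lra.
    - rewrite !mulrBr mulrDr; lra.
    
    have hn1 : q1 + r - s - d1 <= 0 by lra. rewrite (ler0_norm hn1).
    have hn2 : q1 - s - q1 <= 0 by lra. rewrite (ler0_norm hn2).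
    have s2 : 2 * s <= 2 * (al - be)^-1 * (y1 - y2) by rewrite -mulrA ler_pM2l. 
    move: Cge t1 s2. 
    move: (be^-1 * (y1 - y2)) (2 * (al - be)^-1 * (y1 - y2)) (C * (y1 - y2)) => A B Cc Cge tA sB.
    
    clear -hSu sB tA Cge. 
    lra.
  case: (lecase u d1) => hud; case: (lecase u (d1 - q1 - r)) => hus.
  + exists (d1 - u), q1; split; try (apply/andP; split); try lra.
    * rewrite subrr normr0 addr0 (_ : d1 - u - d1 = - u); last by lra.
      rewrite normrN ger0_norm //; lra.
  + apply: D3; lra.
  + apply: D2; lra.
  + case: (lecase d1 (d1 - q1 - r)) => h.
    * by apply: D2.
    * by apply: D3.
Qed.
End L.

Arguments lecase {R}.
Arguments cle {R a x y}.
Arguments stepL {R}.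

Section Main.
Variables (R : realType) (T : nat) (D lam : 'I_T -> R) (c P Emin Emax eta e1 : R).
Hypotheses (hlam : forall t, 0 <= lam t) (hc : 0 <= c) (hP : 0 < P)
  (hEmin : 0 <= Emin) (hE : Emin <= Emax) (heta : 0 < eta) (heta1 : eta <= 1)
  (he1 : Emin <= e1) (he1' : e1 <= Emax).

Ltac loc := move: (hc) (hP) (hEmin) (hE) (heta) (heta1) (he1) (he1') => ? ? ? ? ? ? ? ?.

Local Notation feas := (feasible D P Emin Emax eta e1).
Local Notation arb := (stage2_obj lam c).

Definition Ymem (t : 'I_T) (p y : R) := exists d q : R,
  [/\ 0 <= d <= P, 0 <= q <= P, D t - d + q <= p & y = d / eta - eta * q].

Definition ext (e : 'I_T -> R) (n : nat) : R :=
  match n with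
  | 0 => e1
  | k.+1 => match @insub nat (fun n => n < T)%N 'I_T k with
            | Some i => e i
            | None => e1
            end
  end.

Lemma prev_ext e (t : 'I_T) : prev_soc e1 e t = ext e (val t).
Proof. by []. Qed.

Lemma ext_succ e (t : 'I_T) : ext e (val t).+1 = e t.
Proof. by rewrite /= valK. Qed.

Definition tr (g : nat -> R) : 'I_T -> R := fun t => g (val t).+1.

Lemma ext_tr g n : g 0 = e1 -> (n <= T)%N -> ext (tr g) n = g n.
Proof.
move=> g0; case: n => [|k] Hk /=; first by rewrite g0.
by rewrite (insubT (fun n => n < T)%N Hk).
Qed.

Lemma feasE p d q e (t : 'I_T) : feas p d q e ->
  [/\ D t - d t + q t <= p, ext e t - ext e t.+1 = d t / eta - eta * q t,
      0 <= d t <= P, 0 <= q t <= P & Emin <= ext e t.+1 <= Emax].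
Proof.
move=> /(_ t) [h1 h2 h3 h4 h5]; rewrite ext_succ -prev_ext; split => //.
lra.
Qed.

Arguments feasE {p d q e} t _.

Lemma good_feas p (g : nat -> R) d q : g 0 = e1 ->
  (forall t : 'I_T, [/\ D t - d t + q t <= p, g t - g t.+1 = d t / eta - eta * q t,
      0 <= d t <= P, 0 <= q t <= P & Emin <= g t.+1 <= Emax]) ->
  feas p d q (tr g).
Proof.
move=> g0 H t; case: (H t) => h1 h2 h3 h4 h5; split => //.
rewrite prev_ext ext_tr //; last exact: (ltnW (ltn_ord t)).
rewrite /tr; lra.
Qed.

Lemma Ymem_conv t p y1 y2 y : Ymem t p y1 -> Ymem t p y2 ->
  (y1 <= y <= y2) || (y2 <= y <= y1) -> Ymem t p y.
Proof.
move=> [d1 [q1 [/andP[d10 d1P] /andP[q10 q1P] n1 e1']]]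
       [d2 [q2 [/andP[d20 d2P] /andP[q20 q2P] n2 e2']]] hy.
have [th [th0 th1 ->]] : exists th, [/\ 0 <= th, th <= 1 & y = th * y1 + (1 - th) * y2].
  case: (lecase y1 y2) => h12.
  - case: (lecase y2 y1) => h21.
    + exists 0; split => //; try lra.
    + have hd : 0 < y2 - y1 by lra.
      have hy' : y1 <= y <= y2 by move: hy; case/orP => /andP[] ? ?; apply/andP; lra.
      case/andP: hy' => ha hb.
      exists ((y2 - y) / (y2 - y1)); split.
      * by apply: divr_ge0; lra.
      * by rewrite ler_pdivrMr // mul1r; lra.
      * field; exact: lt0r_neq0.
  - have hd : 0 < y1 - y2 by lra.
    have hy' : y2 <= y <= y1 by move: hy; case/orP => /andP[] ? ?; apply/andP; lra.
    case/andP: hy' => ha hb.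
    exists ((y - y2) / (y1 - y2)); split.
    * by apply: divr_ge0; lra.
    * by rewrite ler_pdivrMr // mul1r; lra.
    * field; exact: lt0r_neq0.
exists (th * d1 + (1 - th) * d2), (th * q1 + (1 - th) * q2); split.
- apply/andP; split; nra.
- apply/andP; split; nra.
- have -> : D t - (th * d1 + (1 - th) * d2) + (th * q1 + (1 - th) * q2)
     = th * (D t - d1 + q1) + (1 - th) * (D t - d2 + q2) by ring.
  nra.
- rewrite e1' e2'; ring.
Qed.

Lemma min_step (a a' b b' : R) :
  let m := Num.min a a' - Num.min b b' in
  (a - b <= m <= a' - b') || (a' - b' <= m <= a - b).
Proof.
rewrite /=.
case: (lecase a a') => ha; [rewrite (min_l ha) | rewrite (min_r (ltW ha))].
all: case: (lecase b b') => hb; [rewrite (min_l hb) | rewrite (min_r (ltW hb))].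
all: apply/orP.
all: case: (lecase (a - b) (a' - b')) => hd; first [left; apply/andP; split; lra | right; apply/andP; split; lra].
Qed.

Lemma max_step (a a' b b' : R) :
  let m := Num.max a a' - Num.max b b' in
  (a - b <= m <= a' - b') || (a' - b' <= m <= a - b).
Proof.
rewrite /=.
case: (lecase a a') => ha; [rewrite (max_r ha) | rewrite (max_l (ltW ha))].
all: case: (lecase b b') => hb; [rewrite (max_r hb) | rewrite (max_l (ltW hb))].
all: apply/orP.
all: case: (lecase (a - b) (a' - b')) => hd; first [left; apply/andP; split; lra | right; apply/andP; split; lra].
Qed.

Lemma inv_facts : [/\ eta * eta^-1 = 1, 0 <= eta^-1 & eta <= eta^-1].
Proof.
loc.
have h1 : eta * eta^-1 = 1 by apply: mulfV; exact: lt0r_neq0.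
have h2 : 0 <= eta^-1 by rewrite invr_ge0; apply: ltW.
have h3 : eta * eta <= 1 by apply: le_trans heta1; rewrite -[X in _ <= X]mulr1; apply: ler_wpM2l => //; apply: ltW.
split => //; apply: (cle heta); rewrite h1; exact: h3.
Qed.

Lemma stepA (t : 'I_T) p p0 d q : p0 <= p -> D t - P <= p0 ->
  0 <= d <= P -> 0 <= q <= P -> D t - d + q <= p ->
  exists d' q', [/\ 0 <= d' <= P, 0 <= q' <= P, D t - d' + q' <= p0,
   d / eta - eta * q <= d' / eta - eta * q' <= d / eta - eta * q + (p - p0) / eta &
   c * d' - lam t * (d' - q') <= c * d - lam t * (d - q) + c * (p - p0)].
Proof.
move=> hp hDP /andP[d0 dP] /andP[q0 qP] hn.
loc.
have [i1 i0 ie] := inv_facts.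
have l0 := hlam t.
have cp : 0 <= c * (p - p0) by nra.
have pa : 0 <= (p - p0) * eta^-1 by nra.
case: (lecase (D t - d + q) p0) => h1.
  exists d, q; split; try (apply/andP; split); lra.
move Hn : (D t - d + q - p0) => need.
have hneed : need * eta^-1 <= (p - p0) * eta^-1 by nra.
have n0 : 0 <= need by lra.
have A1 : eta * need <= need * eta^-1 by nra.
have A2 : 0 <= eta * need by nra.
have A3 : 0 <= lam t * need by nra.
have A4 : c * need <= c * (p - p0) by nra.
case: (lecase need q) => h2.
  exists d, (q - need); split.
  - apply/andP; split; lra.
  - apply/andP; split; lra.
  - lra.
  - apply/andP; split; lra.
  - lra.
have A5 : eta * q <= q * eta^-1 by nra.
have A6 : 0 <= eta * q by nra.
have A7 : 0 <= (need - q) * eta^-1 by nra.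
have A8 : 0 <= c * q by nra.
exists (d + (need - q)), 0; split.
- apply/andP; split; lra.
- apply/andP; split; lra.
- lra.
- apply/andP; split; lra.
- lra.
Qed.

Definition zf (w : 'I_T -> R) (s : nat) : R :=
  match @insub nat (fun n => n < T)%N 'I_T s with Some t => w t | None => 0 end.

Lemma zf_val w (t : 'I_T) : zf w (val t) = w t.
Proof. by rewrite /zf valK. Qed.

Lemma zf_ge0 w : (forall t, 0 <= w t) -> forall s, 0 <= zf w s.
Proof. by move=> H s; rewrite /zf; case: insub => [t|]; rewrite ?lexx. Qed.

Lemma zf_le w b : 0 <= b -> (forall t, w t <= b) -> forall s, zf w s <= b.
Proof. by move=> hb H s; rewrite /zf; case: insub => [t|]. Qed.

Definition Sf (w : 'I_T -> R) (n : nat) : R := \sum_(i < n) zf w i.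

Lemma Sf_succ w n : Sf w n.+1 = Sf w n + zf w n.
Proof. by rewrite /Sf big_ord_recr. Qed.

Lemma Sf0 w : Sf w 0 = 0.
Proof. by rewrite /Sf big_ord0. Qed.

Lemma Sf_ge0 w : (forall t, 0 <= w t) -> forall n, 0 <= Sf w n.
Proof. by move=> H n; apply: sumr_ge0 => i _; apply: zf_ge0. Qed.

Lemma Sf_mono w n : (forall t, 0 <= w t) -> (n <= T)%N -> Sf w n <= Sf w T.
Proof.
move=> H Hn; rewrite /Sf (big_ord_widen T (zf w) Hn).
rewrite [X in _ <= X](bigID (fun i : 'I_T => (i < n)%N)) /= lerDl.
by apply: sumr_ge0 => i _; apply: zf_ge0.
Qed.

Lemma Sf_T w b : 0 <= b -> (forall t, w t <= b) -> Sf w T <= T%:R * b.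
Proof.
move=> hb H; rewrite /Sf.
apply: (@le_trans _ _ (\sum_(i < T) b)).
  by apply: ler_sum => i _; apply: zf_le.
by rewrite sumr_const card_ord mulr_natl.
Qed.

Definition Cst := eta + eta^-1 + 2 * (eta^-1 - eta)^-1.
Definition Lam := \sum_(t < T) lam t.
Definition Lc := T%:R * (T%:R * eta^-1).
Definition Mc := T%:R * c + T%:R * ((c + Lam) * (Cst * (T%:R * eta^-1))).

Lemma Cst_ge0 : 0 <= Cst.
Proof.
loc. have [i1 i0 ie] := inv_facts.
have h : 0 <= (eta^-1 - eta)^-1 by rewrite invr_ge0 subr_ge0.
rewrite /Cst; nra.
Qed.

Lemma lam_le t : lam t <= Lam.
Proof.
rewrite /Lam (bigD1 t) //= lerDl.
by apply: sumr_ge0 => i _; apply: hlam.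
Qed.

Lemma Lam_ge0 : 0 <= Lam.
Proof. by apply: sumr_ge0 => i _; apply: hlam. Qed.

Lemma costL (a l x y : R) : 0 <= a -> 0 <= l ->
  a * x - l * x + l * y <= (a + l) * (`|x| + `|y|).
Proof.
move=> ha hl.
case: (lecase 0 x) => hx; [rewrite (ger0_norm hx) | rewrite (ltr0_norm hx)];
case: (lecase 0 y) => hy; [rewrite (ger0_norm hy) | rewrite (ltr0_norm hy) | rewrite (ger0_norm hy) | rewrite (ltr0_norm hy)]; nra.
Qed.

Lemma lower p p0 d q e d0 q0 e0 : p0 <= p -> feas p d q e -> feas p0 d0 q0 e0 ->
  exists d' q' e', [/\ feas p0 d' q' e',
    \sum_(t < T) e' t <= \sum_(t < T) e t + Lc * (p - p0) &
    arb d' q' <= arb d q + Mc * (p - p0)].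
Proof.
move=> hp Fx F0. loc.
have [i1 i0 ie] := inv_facts.
have hDP t : D t - P <= p0.
  by case: (feasE t F0) => h1 _ /andP[_ h3] /andP[h4 _] _; lra.
have : forall t : 'I_T, exists u : R * R, [/\ 0 <= u.1 <= P, 0 <= u.2 <= P, D t - u.1 + u.2 <= p0,
   d t / eta - eta * q t <= u.1 / eta - eta * u.2 <= d t / eta - eta * q t + (p - p0) / eta &
   c * u.1 - lam t * (u.1 - u.2) <= c * d t - lam t * (d t - q t) + c * (p - p0)].
  move=> t; case: (feasE t Fx) => h1 _ h3 h4 _.
  have [d' [q' H]] := @stepA t p p0 (d t) (q t) hp (hDP t) h3 h4 h1.
  by exists (d', q').
case/fin_all_exists => u1 H1.
pose w := fun t => (u1 t).1 / eta - eta * (u1 t).2 - (d t / eta - eta * q t).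
have w0 t : 0 <= w t by case: (H1 t) => _ _ _ /andP[h _] _; rewrite /w; lra.
have pe0 : 0 <= (p - p0) / eta by nra.
have wb t : w t <= (p - p0) / eta by case: (H1 t) => _ _ _ /andP[_ h] _; rewrite /w; lra.
have S0 := @Sf_ge0 w w0.
have STb := @Sf_T w _ pe0 wb.
pose f := fun n => ext e n - Sf w n.
pose k := fun n => f n + Sf w T.
pose g := fun n => Num.max (Num.min (ext e0 n) (k n)) (f n).
have hf (t : 'I_T) : f t - f t.+1 = (u1 t).1 / eta - eta * (u1 t).2.
  case: (feasE t Fx) => _ h2 _ _ _.
  rewrite /f Sf_succ zf_val /w; lra.
have Yf (t : 'I_T) : Ymem t p0 (f t - f t.+1).
  rewrite hf; case: (H1 t) => h1 h2 h3 _ _; by exists (u1 t).1, (u1 t).2.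
have Yk (t : 'I_T) : Ymem t p0 (k t - k t.+1).
  have -> : k t - k t.+1 = f t - f t.+1 by rewrite /k; ring.
  exact: Yf.
have Y0 (t : 'I_T) : Ymem t p0 (ext e0 t - ext e0 t.+1).
  by case: (feasE t F0) => h1 h2 h3 h4 _; exists (d0 t), (q0 t).
have Yg (t : 'I_T) : Ymem t p0 (g t - g t.+1).
  apply: (@Ymem_conv t p0 (Num.min (ext e0 t) (k t) - Num.min (ext e0 t.+1) (k t.+1)) (f t - f t.+1)).
  - apply: (@Ymem_conv t p0 _ _ _ (Y0 t) (Yk t)).
    exact: min_step.
  - exact: Yf.
  - exact: max_step.
have gf n : f n <= g n by rewrite /g le_max lexx orbT.
have gk n : g n <= f n + Sf w T.
  rewrite /g ge_max; apply/andP; split; first by rewrite ge_min /k lexx orbT.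
  by have := S0 T; lra.
have fe n : f n <= ext e n by rewrite /f; have := S0 n; lra.
have gB (t : 'I_T) : Emin <= g t.+1 <= Emax.
  case: (feasE t Fx) => _ _ _ _ /andP[a1 a2].
  case: (feasE t F0) => _ _ _ _ /andP[b1 b2].
  have m : Sf w t.+1 <= Sf w T := @Sf_mono w t.+1 w0 (ltn_ord t).
  apply/andP; split.
  - rewrite /g le_max le_min b1 /=; apply/orP; left; rewrite /k /f; lra.
  - rewrite /g ge_max; apply/andP; split; first by rewrite ge_min b2.
    by have := fe t.+1; lra.
have g0 : g 0%N = e1.
  have h : e1 <= e1 + Sf w T by have := S0 T; lra.
  by rewrite /g /k /f /= Sf0 subr0 (min_l h) maxxx.
have : forall t : 'I_T, exists u : R * R, [/\ 0 <= u.1 <= P, 0 <= u.2 <= P,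
    D t - u.1 + u.2 <= p0, g t - g t.+1 = u.1 / eta - eta * u.2 &
    c * u.1 - lam t * (u.1 - u.2) <=
      c * (u1 t).1 - lam t * ((u1 t).1 - (u1 t).2) + (c + Lam) * (Cst * Sf w T)].
  move=> t.
  have [d2 [q2 [hd2 hq2 n2 e2]]] := Yg t.
  case: (H1 t) => hd1 hq1 n1 _ _.
  have r1 : D t - p0 <= (u1 t).1 - (u1 t).2 by lra.
  have r2 : D t - p0 <= d2 - q2 by lra.
  have [d3 [q3 [hd3 hq3 hr3 heq hdist]]] :=
    stepL (eta^-1) eta P (D t - p0) (u1 t).1 (u1 t).2 d2 q2 heta ie hd1 hq1 r1 hd2 hq2 r2.
  rewrite invrK -/Cst in hdist.
  exists (d3, q3); split => //=.
  - lra.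
  - lra.
  - have hD : `|eta^-1 * d2 - eta * q2 - (eta^-1 * (u1 t).1 - eta * (u1 t).2)| <= Sf w T.
      rewrite ler_norml; have := gf t; have := gf t.+1; have := gk t; have := gk t.+1; have := hf t.
      move=> *; apply/andP; split; lra.
    have h1 : `|d3 - (u1 t).1| + `|q3 - (u1 t).2| <= Cst * Sf w T.
      apply: le_trans hdist _; apply: ler_wpM2l => //; exact: Cst_ge0.
    have hcl : c + lam t <= c + Lam by have := lam_le t; lra.
    have h2 : (c + lam t) * (`|d3 - (u1 t).1| + `|q3 - (u1 t).2|) <= (c + Lam) * (Cst * Sf w T).
      apply: ler_pM => //; first by have := hlam t; lra.
      by rewrite addr_ge0.
    have h3 : c * (d3 - (u1 t).1) - lam t * (d3 - (u1 t).1) + lam t * (q3 - (u1 t).2)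
        <= (c + lam t) * (`|d3 - (u1 t).1| + `|q3 - (u1 t).2|) := costL _ _ _ _ hc (hlam t).
    lra.
case/fin_all_exists => u2 H2.
exists (fun t => (u2 t).1), (fun t => (u2 t).2), (tr g); split.
- apply: good_feas => [|t]; first exact: g0.
  case: (H2 t) => h1 h2 h3 h4 _; split => //; exact: gB.
- rewrite /tr.
  apply: (@le_trans _ _ (\sum_(t < T) (e t + Sf w T))).
    apply: ler_sum => t _.
    have a1 : g t.+1 <= f t.+1 + Sf w T := gk t.+1.
    have a2 : f t.+1 <= ext e t.+1 := fe t.+1.
    rewrite ext_succ in a2; lra.
  rewrite big_split /=.
  have -> : \sum_(t < T) Sf w T = T%:R * Sf w T by rewrite sumr_const card_ord mulr_natl.
  have hA : T%:R * Sf w T <= T%:R * (T%:R * ((p - p0) / eta)).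
    by apply: ler_wpM2l => //; exact: ler0n.
  have -> : Lc * (p - p0) = T%:R * (T%:R * ((p - p0) / eta)) by rewrite /Lc; ring.
  lra.
- rewrite /stage2_obj.
  apply: (@le_trans _ _ (\sum_(t < T) ((c * d t - lam t * (d t - q t)) +
           (c * (p - p0) + (c + Lam) * (Cst * Sf w T))))).
    apply: ler_sum => t _.
    case: (H2 t) => _ _ _ _ h5; case: (H1 t) => _ _ _ _ h6; lra.
  rewrite big_split /=.
  have -> : \sum_(t < T) (c * (p - p0) + (c + Lam) * (Cst * Sf w T))
     = T%:R * (c * (p - p0) + (c + Lam) * (Cst * Sf w T)) by rewrite sumr_const card_ord mulr_natl.
  have hA : Cst * Sf w T <= Cst * (T%:R * ((p - p0) / eta)).
    by apply: ler_wpM2l => //; exact: Cst_ge0.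
  have hB : (c + Lam) * (Cst * Sf w T) <= (c + Lam) * (Cst * (T%:R * ((p - p0) / eta))).
    by apply: ler_wpM2l => //; apply: addr_ge0 => //; exact: Lam_ge0.
  have hC : T%:R * (c * (p - p0) + (c + Lam) * (Cst * Sf w T)) <=
            T%:R * (c * (p - p0) + (c + Lam) * (Cst * (T%:R * ((p - p0) / eta)))).
    by apply: ler_wpM2l; [exact: ler0n | rewrite lerD2l].
  have -> : Mc * (p - p0) = T%:R * (c * (p - p0) + (c + Lam) * (Cst * (T%:R * ((p - p0) / eta)))).
    by rewrite /Mc; ring.
  lra.
Qed.

Arguments lower {p p0 d q e d0 q0 e0}.

Lemma lattice p d q e d' q' e' : feas p d q e -> feas p d' q' e' ->
  exists d'' q'', feas p d'' q'' (tr (fun n => Num.min (ext e n) (ext e' n))).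
Proof.
move=> F F'. loc.
pose g := fun n => Num.min (ext e n) (ext e' n).
have : forall t : 'I_T, exists u : R * R, [/\ 0 <= u.1 <= P, 0 <= u.2 <= P,
    D t - u.1 + u.2 <= p & g t - g t.+1 = u.1 / eta - eta * u.2].
  move=> t.
  have Y1 : Ymem t p (ext e t - ext e t.+1).
    by case: (feasE t F) => h1 h2 h3 h4 _; exists (d t), (q t).
  have Y2 : Ymem t p (ext e' t - ext e' t.+1).
    by case: (feasE t F') => h1 h2 h3 h4 _; exists (d' t), (q' t).
  have [d2 [q2 [h1 h2 h3 h4]]] := @Ymem_conv t p _ _ (g t - g t.+1) Y1 Y2 (min_step _ _ _ _).
  by exists (d2, q2).
case/fin_all_exists => u H.
exists (fun t => (u t).1), (fun t => (u t).2).
apply: good_feas => [|t]; first by rewrite /= minxx.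
case: (H t) => h1 h2 h3 h4; split => //.
case: (feasE t F) => _ _ _ _ /andP[a1 a2]; case: (feasE t F') => _ _ _ _ /andP[b1 b2].
apply/andP; split; first by rewrite /g le_min a1 b1.
by rewrite /g ge_min a2.
Qed.

Arguments lattice {p d q e d' q' e'}.

Lemma comb_eq kappa p d q : combined_obj D lam c kappa p d q =
  \sum_(t < T) lam t * D t + kappa * p + stage2_obj lam c d q.
Proof.
rewrite /combined_obj /stage2_obj [RHS]addrAC -big_split /=; congr (_ + _).
by apply: eq_bigr => t _; ring.
Qed.

Lemma main_sec : (exists p d q e, feas p d q e) ->
  exists delta0 : R, 0 < delta0 /\
  exists K : R,
  forall delta kappa : R, 0 < delta -> delta < delta0 ->
  0 < kappa -> K < kappa ->
  forall (ps : R) (ds qs es : 'I_T -> R),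
    stage1_opt D P Emin Emax eta e1 delta ps ds qs es ->
    (forall p d q e,
        combined_opt D lam c P Emin Emax eta e1 kappa p d q e -> p = ps) /\
    (forall d q e,
        stage2_opt D lam c P Emin Emax eta e1 ps es d q e ->
        combined_opt D lam c P Emin Emax eta e1 kappa ps d q e /\
        combined_obj D lam c kappa ps d q
          = \sum_(t < T) lam t * D t + kappa * ps + stage2_obj lam c d q).
Proof.
move=> _; loc.
have [i1 i0 ie] := inv_facts.
have L0 : 0 <= Lc.
  rewrite /Lc; apply: mulr_ge0; first exact: ler0n.
  by apply: mulr_ge0 => //; exact: ler0n.
have L1 : 0 < Lc + 1 by lra.
exists (Lc + 1)^-1; split; first by rewrite invr_gt0.
exists Mc => delta kappa hd hdd hk hK ps ds qs es [Fs Opt1].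
have hdl : delta * (Lc + 1) < 1.
  have h : delta * (Lc + 1) < (Lc + 1)^-1 * (Lc + 1) by rewrite ltr_pM2r.
  by rewrite mulVf ?lt0r_neq0 in h.
have pmin : forall p' d' q' e', feas p' d' q' e' -> ps <= p'.
  move=> p' d' q' e' F'; case: (lecase ps p') => // hlt.
  have [d'' [q'' [e'' [F'' hs _]]]] := lower (ltW hlt) Fs F'.
  have h := Opt1 _ _ _ _ F''; rewrite /stage1_obj in h.
  have h2 : delta * \sum_(t < T) e'' t <= delta * (\sum_(t < T) es t + Lc * (ps - p')).
    by rewrite ler_pM2l.
  have h3 : delta * (Lc * (ps - p')) < ps - p' by nra.
  rewrite mulrDr in h2; lra.
have emin : forall d q e, feas ps d q e -> forall t, es t <= e t.
  move=> d q e F t.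
  have [d'' [q'' F'']] := lattice Fs F.
  have h := Opt1 _ _ _ _ F''; rewrite /stage1_obj in h.
  have hs : \sum_(t < T) es t <= \sum_(t < T) tr (fun n => Num.min (ext es n) (ext e n)) t.
    apply: (cle hd); lra.
  have hm t' : tr (fun n => Num.min (ext es n) (ext e n)) t' = Num.min (es t') (e t').
    by rewrite /tr !ext_succ.
  have H0 : \sum_(t' < T) (es t' - Num.min (es t') (e t')) = 0.
    apply/eqP; rewrite eq_le; apply/andP; split.
      rewrite sumrB; under [X in _ - X]eq_bigr => t' _ do rewrite -hm. lra.
    by apply: sumr_ge0 => t' _; rewrite subr_ge0 ge_min lexx.
  have nn : forall t' : 'I_T, true -> 0 <= es t' - Num.min (es t') (e t').
    by move=> t' _; rewrite subr_ge0 ge_min lexx.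
  have h0 : es t - Num.min (es t) (e t) = 0 := psumr_eq0P nn H0 isT.
  have hmin : Num.min (es t) (e t) <= e t by rewrite ge_min lexx orbT.
  lra.
have arbeq := comb_eq.
split.
- move=> p d q e [F Opt].
  have hp : ps <= p := pmin _ _ _ _ F.
  case: (lecase p ps) => h; first by apply/eqP; rewrite eq_le h hp.
  have [d'' [q'' [e'' [F'' _ ha]]]] := lower (ltW h) F Fs.
  have h1 := Opt _ _ _ _ F''.
  rewrite !comb_eq in h1.
  have h2 : Mc * (p - ps) < kappa * (p - ps) by rewrite ltr_pM2r // subr_gt0.
  lra.
- move=> d q e [[F Fe] Opt2]; split; last exact: comb_eq.
  split => // p' d' q' e' F'.
  have hp : ps <= p' := pmin _ _ _ _ F'.
  have [d'' [q'' [e'' [F'' _ ha]]]] := lower hp F' Fs.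
  have h1 := Opt2 _ _ _ (conj F'' (emin _ _ _ F'')).
  rewrite !comb_eq.
  have h2 : Mc * (p' - ps) <= kappa * (p' - ps) by rewrite ler_wpM2r // ?subr_ge0 // ltW.
  lra.
Qed.

End Main.

Theorem proposition1 (R : realType) (T : nat) (D lam : 'I_T -> R)
  (c Pbar Emin Emax eta e1 : R) :
  (forall t : 'I_T, 0 <= lam t) -> 0 <= c -> 0 < Pbar ->
  0 <= Emin -> Emin <= Emax -> 0 < eta -> eta <= 1 ->
  Emin <= e1 -> e1 <= Emax ->
  (exists p d q e, feasible D Pbar Emin Emax eta e1 p d q e) ->
  exists delta0 : R, 0 < delta0 /\
  exists K : R,
  forall delta kappa : R, 0 < delta -> delta < delta0 ->
  0 < kappa -> K < kappa ->
  forall (ps : R) (ds qs es : 'I_T -> R),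
    stage1_opt D Pbar Emin Emax eta e1 delta ps ds qs es ->
    (forall p d q e,
        combined_opt D lam c Pbar Emin Emax eta e1 kappa p d q e -> p = ps) /\
    (forall d q e,
        stage2_opt D lam c Pbar Emin Emax eta e1 ps es d q e ->
        combined_opt D lam c Pbar Emin Emax eta e1 kappa ps d q e /\
        combined_obj D lam c kappa ps d q
          = \sum_(t < T) lam t * D t + kappa * ps + stage2_obj lam c d q).
Proof.
move=> *; apply: main_sec => //.
Qed.
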